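(* Let $(\star)$ be a linear system over $\mathbb{F}_q$ ($q$ a prime power) with coefficient matrix $A\in\mathbb{F}_q^{m\times k}$ which is of type (RC), non-degenerate and irreducible. Let $j_1\ne j_2$ be indices in the same column equivalence class, and let $\{(x^{(i)}_1,\dots,x^{(i)}_k)\}_{i=1}^L$ be a list of pairwise disjoint solutions of $(\star)$ in $(\mathbb{F}_q^n)^k$. If $L\ge4q^k(\Gamma_q)^n$, then there exist $i\in[L]$ and a solution $(y_1,\dots,y_k)$ of $(\star)$ such that: (i) $y_j=x^{(i)}_j$ for all $j\ne j_1,j_2$, and $y_j\in\{x^{(1)}_j,\dots,x^{(L)}_j\}$ for $j\in\{j_1,j_2\}$; (ii) $\mathrm{Ann}_{\mathrm{bal}}(y_1,\dots,y_k)\subseteq\mathrm{Ann}_{\mathrm{bal}}(x^{(i)}_1,\dots,x^{(i)}_k)$; (iii) no $b\in\mathrm{Ann}_{\mathrm{bal}}(y_1,\dots,y_k)$ breaks the pair $\{j_1,j_2\}$.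
   Context: Solutions are tuples in $(\mathbb{F}_q^n)^k$ with $\sum_ja_{ij}x_j=0$ for all $i$. Two solutions $(x_j)$, $(y_j)$ are disjoint if $\{x_1,\dots,x_k\}\cap\{y_1,\dots,y_k\}=\varnothing$. Indices $j,j'$ are equivalent if columns $j,j'$ of $A$ are nonzero scalar multiples of one another; classes are column equivalence classes. A vector $b\in\mathbb{F}_q^k$ breaks the pair $\{j_1,j_2\}$ (two distinct indices in one class) if, after appending $b$ as an extra row to $A$, the columns $j_1,j_2$ are no longer scalar multiples of one another. $\mathrm{Ann}_{\mathrm{bal}}(x_1,\dots,x_k)=\{b\in\mathbb{F}_q^k:\sum_jb_jx_j=0,\ \sum_jb_j=0\}$. Type (RC): every row of $A$ sums to $0$ and at most one column equivalence class has size $1$. Non-degenerate: rows of $A$ linearly independent and no zero column. Irreducible: not equivalent (same row space) to a system whose variables split into at least two classes with each equation only using variables of one class. $\Gamma_q:=q\,J(q)$ where $J(t)=\frac1t\min_{0<x<1}\frac{1+x+\cdots+x^{t-1}}{x^{(t-1)/3}}$. *)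

(* Defs.v *)
From HB Require Import structures.
From mathcomp Require Import all_boot all_order all_algebra all_field.
From mathcomp Require Import all_classical all_reals all_analysis.
Set Implicit Arguments. Unset Strict Implicit. Unset Printing Implicit Defensive.
Import Order.TTheory GRing.Theory Num.Theory.
Local Open Scope ring_scope.

Section LinSys.
Variables (F : finFieldType) (m k n : nat).

Definition is_solution (A : 'M[F]_(m, k)) (x : 'I_k -> 'rV[F]_n) : Prop :=
  forall i : 'I_m, \sum_(j < k) A i j *: x j = 0.

Definition col_equiv (r : nat) (A : 'M[F]_(r, k)) (j j' : 'I_k) : Prop :=
  exists c : F, c != 0 /\ col j A = c *: col j' A.

Definition breaks (A : 'M[F]_(m, k)) (j1 j2 : 'I_k) (b : 'rV[F]_k) : Prop :=
  ~ col_equiv (col_mx A b) j1 j2.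

Definition Ann_bal (x : 'I_k -> 'rV[F]_n) (b : 'rV[F]_k) : Prop :=
  \sum_(j < k) b 0 j *: x j = 0 /\ \sum_(j < k) b 0 j = 0.

Definition singleton_class (A : 'M[F]_(m, k)) (j : 'I_k) : Prop :=
  forall j', col_equiv A j j' -> j' = j.

Definition type_RC (A : 'M[F]_(m, k)) : Prop :=
  (forall i : 'I_m, \sum_(j < k) A i j = 0) /\
  (forall j j', singleton_class A j -> singleton_class A j' -> j = j').

Definition non_degenerate (A : 'M[F]_(m, k)) : Prop :=
  row_free A /\ (forall j : 'I_k, col j A != 0).

(* A is reducible if some system B with the same row space has its variables
   split into at least two classes (labelling c with >= 2 values) such that
   every equation only uses variables of one class. *)
Definition irreducible_sys (A : 'M[F]_(m, k)) : Prop :=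
  ~ exists (m' : nat) (B : 'M[F]_(m', k)) (c : 'I_k -> 'I_k),
      (B == A)%MS /\ (exists j j', c j != c j') /\
      (forall i : 'I_m', exists l, forall j, B i j != 0 -> c j = l).

End LinSys.

(* J(t) = (1/t) min_{0<x<1} (1+x+...+x^{t-1}) / x^{(t-1)/3};
   the minimum is attained, so it equals the infimum used here. *)
Definition Jfun (R : realType) (t : nat) (x : R) : R :=
  (\sum_(i < t) x ^+ i) / powR x ((t%:R - 1) / 3).

Definition Jconst (R : realType) (t : nat) : R :=
  t%:R^-1 * inf [set y | exists x : R, 0 < x < 1 /\ y = Jfun t x].

Definition Gamma (R : realType) (q : nat) : R := q%:R * Jconst R q.

(* Main.v *)
Require Import Defs.
From HB Require Import structures.
From mathcomp Require Import all_boot all_order all_algebra all_field.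
From mathcomp Require Import zify ring.
Set Implicit Arguments. Unset Strict Implicit. Unset Printing Implicit Defensive.

Section Turan.
Variables (V : finType) (E : rel V) (D : nat).
Hypothesis hD : forall i, #|[set a | E i a]| <= D.

Definition indep (S : {set V}) := forall i a, i \in S -> a \in S -> i != a -> ~~ E i a.

Lemma card_cond (T : {set V}) (P : pred V) :
  #|[set a in T | P a]| = \sum_(a in T) (P a : nat).
Proof.
rewrite -sum1_card big_mkcond /= [RHS]big_mkcond /=; apply: eq_bigr => a _.
by rewrite !inE; case: (a \in T); case: (P a).
Qed.

Lemma low_deg (T : {set V}) : T != set0 ->
  exists2 v, v \in T & #|[set a in T | E v a]| + #|[set a in T | E a v]| <= 2 * D.
Proof.
move=> T0.
case: (boolP [exists v in T, #|[set a in T | E v a]| + #|[set a in T | E a v]| <= 2 * D])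
  => [/exists_inP [v vT hv]|]; first by exists v.
rewrite negb_exists_in => /forall_inP hall; exfalso.
have h1 : \sum_(v in T) (2 * D).+1 <= \sum_(v in T) (#|[set a in T | E v a]| + #|[set a in T | E a v]|).
  by apply: leq_sum => v /hall; rewrite -ltnNge.
rewrite big_split /= in h1.
have h2 : \sum_(v in T) #|[set a in T | E a v]| = \sum_(v in T) #|[set a in T | E v a]|.
  transitivity (\sum_(v in T) \sum_(a in T) (E a v : nat)).
    by apply: eq_bigr => v _; rewrite card_cond.
  by rewrite exchange_big /=; apply: eq_bigr => v _; rewrite card_cond.
have h3 : \sum_(v in T) #|[set a in T | E v a]| <= \sum_(v in T) D.
  apply: leq_sum => v _; apply: leq_trans (hD v); apply: subset_leq_card.
  by apply/subsetP => a; rewrite !inE => /andP [].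
rewrite h2 !sum_nat_const in h1 h3.
have : #|T| != 0 by rewrite cards_eq0.
lia.
Qed.


Lemma turan_ind n (T : {set V}) : #|T| <= n ->
  exists S : {set V}, [/\ S \subset T, indep S & #|T| <= (2 * D).+1 * #|S|].
Proof.
elim: n T => [|n IH] T hT.
  exists set0; split; rewrite ?sub0set //; last by lia.
  by move=> i a; rewrite inE.
have [->|T0] := eqVneq T set0.
  exists set0; split; rewrite ?sub0set ?cards0 //.
  by move=> i a; rewrite inE.
have [v vT hv] := low_deg T0.
pose X := v |: ([set a in T | E v a] :|: [set a in T | E a v]).
pose T' := T :\: X.
have vX : v \in X by rewrite !inE eqxx.
have hX : #|X| <= (2 * D).+1.
  rewrite /X cardsU1 -add1n; apply: leq_add (leq_b1 _) _.
  exact: leq_trans (leq_card_setU _ _) hv.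
have hT' : #|T| <= #|T'| + (2 * D).+1.
  rewrite -(cardsID X T) addnC leq_add2l; apply: leq_trans hX.
  by apply: subset_leq_card; rewrite subsetIr.
have vT' : v \notin T' by rewrite /T' in_setD vX.
have lT' : #|T'| <= n.
  rewrite -ltnS; apply: leq_trans hT; apply: proper_card; apply/properP; split.
    by rewrite subsetDl.
  by exists v.
have [S' [S'T' iS' cS']] := IH T' lT'.
have vS' : v \notin S' by apply: contra vT'; apply: (subsetP S'T').
exists (v |: S'); split.
- apply/subsetP => a; rewrite !inE => /orP [/eqP ->//|aS].
  by have := subsetP S'T' a aS; rewrite !inE => /andP [].
- move=> i a; rewrite !inE => /orP [/eqP ->|iS] /orP [/eqP ->|aS].
  + by rewrite eqxx.
  + move=> _; have := subsetP S'T' a aS; rewrite /T' in_setD => /andP [aX aT].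
    by apply: contra aX => ev; rewrite /X !inE aT ev !orbT.
  + move=> _; have := subsetP S'T' i iS; rewrite /T' in_setD => /andP [iX iT].
    by apply: contra iX => ev; rewrite /X !inE iT ev !orbT.
  + exact: iS'.
- rewrite cardsU1 vS' /=; apply: leq_trans hT' _.
  by rewrite mulnDr muln1 addnC leq_add2l.
Qed.

Lemma turan : exists S : {set V}, indep S /\ #|V| <= (2 * D).+1 * #|S|.
Proof.
have [S [_ iS cS]] := @turan_ind #|[set: V]| [set: V] (leqnn _).
by exists S; split; rewrite // -cardsT.
Qed.
End Turan.

Import Order.TTheory GRing.Theory Num.Theory.
Local Open Scope ring_scope.

Lemma rank_mxsub (F : fieldType) m n m' n' (f : 'I_m' -> 'I_m) (g : 'I_n' -> 'I_n)
  (A : 'M[F]_(m, n)) : (\rank (mxsub f g A) <= \rank A)%N.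
Proof.
have -> : mxsub f g A = rowsub f 1%:M *m (A *m colsub g 1%:M).
  rewrite mulmx_colsub mulmx1 mul_rowsub_mx mul1mx.
  by apply/matrixP => i j; rewrite !mxE.
apply: leq_trans (mxrankM_maxr _ _) _; exact: mxrankM_maxl.
Qed.

Lemma support_vec (F : fieldType) p N (K : 'M[F]_(p, N)) :
  exists h : 'rV[F]_N, exists s : 'I_(\rank K) -> 'I_N,
    [/\ (h <= K)%MS, injective s & forall i, h 0 (s i) = 1].
Proof.
pose B := row_base K.
have fB : row_full B^T by rewrite /row_full mxrank_tr eq_row_base.
pose s := fullrankfun fB.
have uS : (rowsub s B^T)^T \in unitmx by rewrite unitmx_tr fullrowsub_unit.
pose h : 'rV[F]_N := const_mx 1 *m invmx (rowsub s B^T)^T *m B.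
exists h, s; split.
- by rewrite (submx_trans (submxMl _ _)) // eq_row_base.
- exact: fullrankfun_inj.
- move=> i.
  have : colsub s h = const_mx 1.
    rewrite /h -mulmx_colsub.
    have -> : colsub s B = (rowsub s B^T)^T by rewrite trmx_mxsub trmxK.
    by rewrite -mulmxA mulVmx // mulmx1.
  by move/matrixP/(_ 0 i); rewrite !mxE.
Qed.

Lemma sum_ev (F : fieldType) (U : finType) (G : U -> F) :
  \sum_u G u = \sum_(j < #|U|) G (enum_val j).
Proof. by rewrite -(big_enum_val G). Qed.

Lemma slice_bound (F : fieldType) (N : nat) (U1 U2 U3 : finType)
  (f1 : U1 -> 'I_N -> F) (g1 : U1 -> 'I_N -> 'I_N -> F)
  (f2 : U2 -> 'I_N -> F) (g2 : U2 -> 'I_N -> 'I_N -> F)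
  (f3 : U3 -> 'I_N -> F) (g3 : U3 -> 'I_N -> 'I_N -> F) :
  (forall a b c : 'I_N, ((a == b) && (b == c))%:R =
     \sum_u f1 u a * g1 u b c + \sum_u f2 u b * g2 u a c + \sum_u f3 u c * g3 u a b) ->
  (N <= #|U1| + #|U2| + #|U3|)%N.
Proof.
move=> Hd.
pose F1 : 'M[F]_(N, #|U1|) := \matrix_(a, j) f1 (enum_val j) a.
have [h [s [hK sinj hs]]] := support_vec (kermx F1).
have hF1 : forall u, \sum_a h 0 a * f1 u a = 0.
  move=> u; move/sub_kermxP: hK => /matrixP /(_ 0 (enum_rank u)).
  by rewrite !mxE; under eq_bigr do rewrite !mxE enum_rankK.
pose Mh : 'M[F]_N := \matrix_(b, c) \sum_a h 0 a * ((a == b) && (b == c))%:R.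
have r1 : (\rank (kermx F1) <= \rank Mh)%N.
  have E : mxsub s s Mh = 1%:M.
    apply/matrixP => i j; rewrite !mxE (bigD1 (s i)) //= big1 ?addr0.
      by rewrite eqxx /= (inj_eq sinj) hs mul1r.
    by move=> a /negPf ->; rewrite mulr0.
  by rewrite -[X in (X <= _)%N](mxrank1 F) -E rank_mxsub.
pose F2 : 'M[F]_(N, #|U2|) := \matrix_(b, j) f2 (enum_val j) b.
pose G2 : 'M[F]_(#|U2|, N) := \matrix_(j, c) \sum_a h 0 a * g2 (enum_val j) a c.
pose F3 : 'M[F]_(N, #|U3|) := \matrix_(c, j) f3 (enum_val j) c.
pose G3 : 'M[F]_(#|U3|, N) := \matrix_(j, b) \sum_a h 0 a * g3 (enum_val j) a b.
have EM : Mh = F2 *m G2 + (F3 *m G3)^T.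
  apply/matrixP => b c; rewrite !mxE.
  under eq_bigr do rewrite Hd !mulrDr.
  rewrite !big_split /=.
  have -> : \sum_a h 0 a * (\sum_u f1 u a * g1 u b c) = 0.
    under eq_bigr do rewrite big_distrr /=.
    rewrite exchange_big big1 // => u _.
    by under eq_bigr do rewrite mulrA; rewrite -big_distrl /= hF1 mul0r.
  rewrite add0r; congr (_ + _).
    under eq_bigr do rewrite big_distrr /=.
    rewrite exchange_big /= (sum_ev (fun u => \sum_i h 0 i * (f2 u b * g2 u i c))).
    apply: eq_bigr => j _; rewrite !mxE big_distrr /=.
    by apply: eq_bigr => a _; rewrite mulrCA.
  under eq_bigr do rewrite big_distrr /=.
  rewrite exchange_big /= (sum_ev (fun u => \sum_i h 0 i * (f3 u c * g3 u i b))).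
  apply: eq_bigr => j _; rewrite !mxE big_distrr /=.
  by apply: eq_bigr => a _; rewrite mulrCA.
have r2 : (\rank Mh <= #|U2| + #|U3|)%N.
  rewrite EM; apply: leq_trans (mxrank_add _ _) _; apply: leq_add.
    exact: leq_trans (mxrankM_maxl _ _) (rank_leq_col _).
  by rewrite mxrank_tr; exact: leq_trans (mxrankM_maxl _ _) (rank_leq_col _).
have r0 : (N - #|U1| <= \rank (kermx F1))%N.
  by rewrite mxrank_ker leq_sub2l // rank_leq_col.
rewrite -addnA -leq_subLR.
exact: leq_trans r0 (leq_trans r1 r2).
Qed.
Section Coord.
Variable F : finFieldType.
Local Notation q := #|F|.

Lemma q_gt1 : (1 < q)%N.
Proof. exact: finNzRing_gt1. Qed.

Lemma pow_qm1 (z : F) : z ^+ q.-1 = (z != 0)%:R.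
Proof.
have hq := q_gt1.
have hq' : (0 < q.-1)%N by rewrite -ltnS prednK // ltnW.
have [->|nz] := eqVneq z 0; first by rewrite expr0n /= -[q.-1]prednK.
rewrite /=; apply: (mulIf nz); rewrite -exprSr prednK ?expf_card ?mul1r //.
exact: ltnW.
Qed.

Definition vv (a b c : F) (k : 'I_3) : F :=
  if val k == 0%N then a else if val k == 1%N then b else c.

Definition cnt (f : {ffun 'I_q.-1 -> 'I_3}) (k : nat) : nat :=
  #|[pred s | val (f s) == k]|.

Definition TT := option {ffun 'I_q.-1 -> 'I_3}.
Definition kap (t : TT) : F := if t is Some _ then -1 else 1.
Definition exq (t : TT) (k : nat) : nat := if t is Some f then cnt f k else 0%N.

Lemma cnt_sum m (f : 'I_m -> 'I_3) :
  (#|[pred s | val (f s) == 0%N]| + #|[pred s | val (f s) == 1%N]|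
   + #|[pred s | val (f s) == 2%N]|)%N = m.
Proof.
transitivity (\sum_(s < m) 1)%N; last by rewrite sum1_card card_ord.
rewrite (partition_big (fun s => f s) predT) // !big_ord_recr big_ord0 /= add0n.
have E : forall k : 'I_3, (\sum_(i < m | true && (f i == k)) 1)%N
            = #|[pred s | val (f s) == val k]|.
  by move=> k; rewrite sum1_card; apply: eq_card => s; rewrite !inE.
by rewrite !E.
Qed.

Lemma ex_sum t : (exq t 0 + exq t 1 + exq t 2 <= q.-1)%N.
Proof. by case: t => [f|] //=; rewrite /cnt cnt_sum. Qed.

Lemma sum_option (T : finType) (x0 : T) (G : option T -> F) :
  \sum_t G t = G None + \sum_x G (Some x).
Proof.
rewrite (bigD1 None) //=; congr (_ + _).
rewrite (reindex (@Some T)) /=; first by apply: eq_bigl.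
exists (odflt x0) => [x _ //|[y|] //].
Qed.

Lemma coord_id a b c :
  ((a + b + c == 0))%:R =
  \sum_(t : TT) kap t * (a ^+ exq t 0 * b ^+ exq t 1 * c ^+ exq t 2).
Proof.
have f0 : {ffun 'I_q.-1 -> 'I_3} := [ffun=> ord0].
rewrite (sum_option f0) /= !expr0 !mulr1.
have -> : ((a + b + c == 0))%:R = 1 - (a + b + c) ^+ q.-1 :> F.
  by rewrite pow_qm1; case: (a + b + c == 0); rewrite /= ?subrr ?subr0.
congr (_ + _).
have -> : (a + b + c) ^+ q.-1 = \prod_(s < q.-1) (a + b + c).
  by rewrite prodr_const card_ord.
have -> : a + b + c = \sum_(k < 3) vv a b c k.
  by rewrite !big_ord_recl big_ord0 /vv /= addr0 addrA.
rewrite bigA_distr_bigA /= -sumrN; apply: eq_bigr => f _.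
rewrite mulN1r; congr (- _).
rewrite (partition_big (fun s => f s) predT) //= !big_ord_recr big_ord0 /= mul1r.
have E : forall k : 'I_3, \prod_(i < q.-1 | true && (f i == k)) vv a b c (f i)
            = vv a b c k ^+ cnt f k.
  move=> k; rewrite -prodr_const; apply: eq_big => s; first by rewrite !inE.
  by move=> /= /eqP ->.
by rewrite !E /vv /=.
Qed.



Lemma ex_lt t i : (i <= 2)%N -> (exq t i < q)%N.
Proof.
move=> hi; have := ex_sum t; have hq := q_gt1.
have : (exq t i <= exq t 0 + exq t 1 + exq t 2)%N.
  by case: i hi => [|[|[|]]] //= _; lia.
move=> h1 h2; apply: (leq_ltn_trans (leq_trans h1 h2)).
by rewrite prednK // ltnW.
Qed.

Variable C : finType.
Definition o0 : 'I_3 := Ordinal (isT : (0 < 3)%N).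
Definition o1 : 'I_3 := Ordinal (isT : (1 < 3)%N).
Definition o2 : 'I_3 := Ordinal (isT : (2 < 3)%N).

Definition mono (x : C -> F) (e : {ffun C -> 'I_q}) : F := \prod_l x l ^+ e l.
Definition deg (e : {ffun C -> 'I_q}) : nat := (\sum_l (e l : nat))%N.
Definition Es : {set {ffun C -> 'I_q}} := [set e | (3 * deg e <= q.-1 * #|C|)%N].
Definition EE (i : 'I_3) (phi : {ffun C -> TT}) : {ffun C -> 'I_q} :=
  [ffun l => Ordinal (ex_lt (phi l) (ltn_ord i))].
Definition Kf (phi : {ffun C -> TT}) : F := \prod_l kap (phi l).

Lemma EE_val i phi l : (EE i phi l : nat) = exq (phi l) i.
Proof. by rewrite ffunE. Qed.

Lemma prod_expand (x y z : C -> F) :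
  \prod_l ((x l + y l + z l == 0))%:R =
  \sum_(phi : {ffun C -> TT}) Kf phi *
     (mono x (EE o0 phi) * mono y (EE o1 phi) * mono z (EE o2 phi)).
Proof.
under eq_bigr do rewrite coord_id.
rewrite bigA_distr_bigA /=; apply: eq_bigr => phi _.
rewrite /Kf /mono -!big_split /=; apply: eq_bigr => l _.
by rewrite !EE_val.
Qed.

Lemma EE_deg phi : (deg (EE o0 phi) + deg (EE o1 phi) + deg (EE o2 phi) <= q.-1 * #|C|)%N.
Proof.
rewrite /deg -!big_split /= mulnC -sum_nat_const; apply: leq_sum => l _.
by rewrite !EE_val ex_sum.
Qed.

Lemma split3 (X : {ffun C -> TT} -> F) :
  \sum_phi X phi =
    \sum_(phi | EE o0 phi \in Es) X phi
  + \sum_(phi | (EE o0 phi \notin Es) && (EE o1 phi \in Es)) X phi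
  + \sum_(phi | (EE o0 phi \notin Es) && (EE o1 phi \notin Es)) X phi.
Proof.
rewrite (bigID (fun phi => EE o0 phi \in Es)) /= -addrA; congr (_ + _).
by rewrite (bigID (fun phi => EE o1 phi \in Es)).
Qed.

Lemma third_small phi :
  (EE o0 phi \notin Es) && (EE o1 phi \notin Es) -> EE o2 phi \in Es.
Proof.
rewrite /Es !inE -!ltnNge => /andP [h0 h1].
have := EE_deg phi; lia.
Qed.

Lemma part_sum (P : pred {ffun C -> TT}) (p : {ffun C -> TT} -> {ffun C -> 'I_q})
   (x : C -> F) (Y : {ffun C -> TT} -> F) :
  (forall phi, P phi -> p phi \in Es) ->
  \sum_(phi | P phi) mono x (p phi) * Y phi =
  \sum_(j < #|Es|) mono x (enum_val j) *
        \sum_(phi | P phi && (p phi == enum_val j)) Y phi.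
Proof.
move=> hP; rewrite (partition_big p (mem Es)) //= -(big_enum_val (fun u =>
   mono x u * \sum_(phi | P phi && (p phi == u)) Y phi)) /=.
apply: eq_bigr => u _; rewrite big_distrr /=.
by apply: eq_bigr => phi /andP [_ /eqP ->].
Qed.

Variable I : finType.

Lemma sumfree_bound (al be ga : I -> C -> F) :
  (forall a b c, (forall l, al a l + be b l + ga c l = 0) <-> (a = b /\ b = c)) ->
  (#|I| <= 3 * #|Es|)%N.
Proof.
move=> H.
pose ev := fun j : 'I_#|I| => (enum_val j : I).
have evi : injective ev by apply: enum_val_inj.
pose X (a b c : 'I_#|I|) phi := Kf phi * (mono (al (ev a)) (EE o0 phi) *
     mono (be (ev b)) (EE o1 phi) * mono (ga (ev c)) (EE o2 phi)).
have Hd : forall a b c : 'I_#|I|, ((a == b) && (b == c))%:R =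
  \sum_(j < #|Es|) mono (al (ev a)) (enum_val j) *
     \sum_(phi | (EE o0 phi \in Es) && (EE o0 phi == enum_val j))
        (Kf phi * (mono (be (ev b)) (EE o1 phi) * mono (ga (ev c)) (EE o2 phi)))
  + \sum_(j < #|Es|) mono (be (ev b)) (enum_val j) *
     \sum_(phi | ((EE o0 phi \notin Es) && (EE o1 phi \in Es)) && (EE o1 phi == enum_val j))
        (Kf phi * (mono (al (ev a)) (EE o0 phi) * mono (ga (ev c)) (EE o2 phi)))
  + \sum_(j < #|Es|) mono (ga (ev c)) (enum_val j) *
     \sum_(phi | ((EE o0 phi \notin Es) && (EE o1 phi \notin Es)) && (EE o2 phi == enum_val j))
        (Kf phi * (mono (al (ev a)) (EE o0 phi) * mono (be (ev b)) (EE o1 phi))).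
  move=> a b c.
  have -> : ((a == b) && (b == c))%:R =
      \prod_l ((al (ev a) l + be (ev b) l + ga (ev c) l == 0))%:R :> F.
    have [hall|hn] := boolP [forall l, al (ev a) l + be (ev b) l + ga (ev c) l == 0].
      have [e1 e2] : ev a = ev b /\ ev b = ev c.
        by apply/H => l; apply/eqP; move/forallP: hall.
      rewrite big1 => [|l _]; last by move/forallP: hall => /(_ l) ->.
      by rewrite (evi _ _ e1) (evi _ _ e2) !eqxx.
    have [l /negPf hl] : exists l, ~~ (al (ev a) l + be (ev b) l + ga (ev c) l == 0).
      by apply/existsP; rewrite -negb_forall.
    rewrite (bigD1 l) //= hl mul0r.
    case: eqP => [eab|] //=; case: eqP => [ebc|] //=.
    subst; by rewrite (proj2 (H _ _ _) (conj erefl erefl) l) eqxx in hl.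
  rewrite prod_expand split3.
  congr (_ + _ + _).
  - by rewrite -part_sum //; apply: eq_bigr => phi _; ring.
  - rewrite -part_sum; first by apply: eq_bigr => phi _; ring.
    by move=> phi /andP [].
  - rewrite -part_sum; first by apply: eq_bigr => phi _; ring.
    exact: third_small.
have := slice_bound Hd.
by rewrite !card_ord; lia.
Qed.

End Coord.

From mathcomp Require Import all_classical all_reals all_analysis.
From mathcomp Require Import lra.
Import Order.TTheory GRing.Theory Num.Theory.
Local Open Scope ring_scope.

Section Count.
Variables (R : realType) (F : finFieldType) (C : finType).
Local Notation q := #|F|.

Lemma Jfun_gt0 (x : R) : 0 < x < 1 -> 0 < Jfun q x.
Proof.
move=> /andP [x0 x1]; rewrite /Jfun divr_gt0 ?powR_gt0 //.
rewrite -(prednK (ltnW (q_gt1 F))) big_ord_recl expr0.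
by rewrite ltr_pwDl // sumr_ge0 // => i _; rewrite exprn_ge0 // ltW.
Qed.

Lemma count_bound (x : R) : 0 < x < 1 ->
  (#|Es F C|%:R : R) <= Jfun q x ^+ #|C|.
Proof.
move=> /andP [x0 x1].
pose d : R := (q%:R - 1) / 3.
pose P := powR x d ^+ #|C|.
have P0 : 0 < P by rewrite exprn_gt0 // powR_gt0.
have hP : P = powR x (#|C|%:R * d).
  by rewrite /P [_%:R * d]mulrC (powRrM x d #|C|%:R) powR_mulrn // powR_ge0.
have step : forall e : {ffun C -> 'I_q}, ((e \in Es F C)%:R : R) <= x ^+ deg e / P.
  move=> e; have [he|he] := boolP (e \in Es F C); last first.
    by apply: divr_ge0; [apply: exprn_ge0; apply: ltW|apply: ltW].
  rewrite ler_pdivlMr // mul1r hP -powR_mulrn; last exact: ltW.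
  apply: ger_powR; first by rewrite x0 ltW.
  move: he; rewrite /Es inE /d => h.
  have q1 : (q%:R - 1 : R) = (q.-1)%:R.
    have hq : (0 < q)%N := ltnW (q_gt1 F).
    by rewrite -{1}(prednK hq) -natr1 addrK.
  rewrite q1 mulrA ler_pdivlMr ?ltr0n // -!natrM ler_nat; lia.
have -> : (#|Es F C|%:R : R) = \sum_(e : {ffun C -> 'I_q}) ((e \in Es F C)%:R : R).
  rewrite -sum1_card natr_sum big_mkcond /=; apply: eq_bigr => e _.
  by case: (e \in Es F C).
apply: le_trans (ler_sum _ (fun e _ => step e)) _.
rewrite -mulr_suml.
have -> : \sum_(e : {ffun C -> 'I_q}) x ^+ deg e = \prod_(l : C) \sum_(i : 'I_q) x ^+ i.
  rewrite bigA_distr_bigA /=; apply: eq_bigr => e _.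
  by rewrite /deg -prodrXr.
by rewrite prodr_const /Jfun /P exprMn exprVn.
Qed.
End Count.

Lemma bern (R : realType) (y : R) n : 0 <= y -> 1 + n%:R * y <= (1 + y) ^+ n.
Proof.
move=> y0; elim: n => [|n IH]; first by rewrite mul0r addr0 expr0.
rewrite exprSr; apply: le_trans (_ : (1 + n%:R * y) * (1 + y) <= _).
  have : 0 <= n%:R * y * y by rewrite mulr_ge0 // mulr_ge0.
  rewrite -natr1; nra.
by rewrite ler_wpM2r // addr_ge0.
Qed.

Lemma pow_le (R : realType) (A B : R) : 0 < B ->
  (forall t : nat, A ^+ t <= 3 * B ^+ t) -> A <= B.
Proof.
move=> B0 H; rewrite leNgt; apply/negP => BA.
pose y := A / B - 1.
have y0 : 0 < y by rewrite /y subr_gt0 ltr_pdivlMr // mul1r.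
pose t := (Num.truncn (2 / y)).+1.
have ht : 2 / y < t%:R by apply: truncnS_gt.
have h1 : (1 + y) ^+ t <= 3.
  rewrite /y addrC subrK expr_div_n ler_pdivrMr ?exprn_gt0 //.
have h2 := bern t (ltW y0).
move: ht; rewrite ltr_pdivrMr // => ht.
have : 1 + t%:R * y <= 3 := le_trans h2 h1.
lra.
Qed.

Section Tensor.
Variables (R : realType) (F : finFieldType) (C I : finType).
Local Notation q := #|F|.

Lemma sumfree_J (al be ga : I -> C -> F) :
  (forall a b c, (forall l, al a l + be b l + ga c l = 0) <-> (a = b /\ b = c)) ->
  forall x : R, 0 < x < 1 -> (#|I|%:R : R) <= Jfun q x ^+ #|C|.
Proof.
move=> H x hx; apply: pow_le; first by rewrite exprn_gt0 // Jfun_gt0.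
move=> t.
pose al' (f : {ffun 'I_t -> I}) (p : ('I_t * C)%type) := al (f p.1) p.2.
pose be' (f : {ffun 'I_t -> I}) (p : ('I_t * C)%type) := be (f p.1) p.2.
pose ga' (f : {ffun 'I_t -> I}) (p : ('I_t * C)%type) := ga (f p.1) p.2.
have H' : forall a b c, (forall l, al' a l + be' b l + ga' c l = 0) <-> (a = b /\ b = c).
  move=> f g h; split => [hl|[-> ->] [s l]]; last exact: (proj2 (H _ _ _) (conj erefl erefl) l).
  have hs : forall s, f s = g s /\ g s = h s by move=> s; apply/H => l; exact: (hl (s, l)).
  by split; apply/ffunP => s; have [] := hs s.
have := sumfree_bound H'.
rewrite card_ffun card_ord => hb.
rewrite -natrX; apply: (@le_trans _ _ ((3 * #|Es F (prod 'I_t C)|)%N%:R)).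
  by rewrite ler_nat.
have hc := @count_bound R F (prod 'I_t C) x hx.
rewrite card_prod card_ord in hc.
rewrite natrM -exprM mulnC; apply: ler_wpM2l => //.
Qed.
End Tensor.

Section GammaB.
Variables (R : realType) (F : finFieldType).
Local Notation q := #|F|.

Definition JS : set R := [set y | exists x : R, 0 < x < 1 /\ y = Jfun q x].

Lemma Gamma_inf : Gamma R q = inf JS.
Proof.
rewrite /Gamma /Jconst mulrA mulfV ?mul1r //.
by rewrite pnatr_eq0 -lt0n ltnW // q_gt1.
Qed.

Lemma half01 : 0 < (2^-1 : R) < 1.
Proof. by rewrite invr_gt0 ltr0n /= invf_lt1 // ltr1n. Qed.

Lemma JS_ne : (JS !=set0)%classic.
Proof. by exists (Jfun q (2^-1 : R)), 2^-1; split => //; exact: half01. Qed.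

Lemma Jfun_ge1 (x : R) : 0 < x < 1 -> 1 <= Jfun q x.
Proof.
move=> /andP [x0 x1]; rewrite /Jfun ler_pdivlMr ?powR_gt0 // mul1r.
apply: (@le_trans _ _ 1).
  rewrite -[X in _ <= X](powRr0 x).
  apply: ger_powR; first by rewrite x0 ltW.
  by rewrite divr_ge0 // subr_ge0 ler1n ltnW // q_gt1.
rewrite -(prednK (ltnW (q_gt1 F))) big_ord_recl expr0.
by rewrite lerDl sumr_ge0 // => i _; rewrite exprn_ge0 // ltW.
Qed.

Lemma Gamma_ge1 : 1 <= Gamma R q.
Proof.
rewrite Gamma_inf; apply: lb_le_inf; first exact: JS_ne.
by move=> y [x [hx ->]]; exact: Jfun_ge1.
Qed.

Lemma le_Gamma (n : nat) (a : R) : 0 <= a ->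
  (forall x : R, 0 < x < 1 -> a <= Jfun q x ^+ n) -> a <= Gamma R q ^+ n.
Proof.
move=> a0 H.
case: n H => [|n] H; first by rewrite expr0; have := H _ half01; rewrite expr0.
pose z := powR a (n.+1%:R^-1).
have za : z ^+ n.+1 = a.
  by rewrite /z -powR_mulrn ?powR_ge0 // -powRrM mulVf ?powRr1 // pnatr_eq0.
have z0 : 0 <= z by rewrite powR_ge0.
have g0 : 0 <= Gamma R q by apply: le_trans Gamma_ge1.
have [zg|gz] := leP z (Gamma R q).
  by rewrite -za lerXn2r // nnegrE.
move: gz; rewrite Gamma_inf => /(inf_lt JS_ne) [y [x [hx ->]]] hy.
have := H x hx; rewrite -za.
have J0 : 0 <= Jfun q x by apply: le_trans (Jfun_ge1 hx).
by rewrite leNgt ltrXn2r.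
Qed.
End GammaB.

Section Main.
Variables (F : finFieldType) (m k n L : nat) (A : 'M[F]_(m, k)) (j1 j2 : 'I_k).
Variable (x : 'I_L -> 'I_k -> 'rV[F]_n) (c : F).
Hypothesis j12 : j1 != j2.
Hypothesis hc : col j1 A = c *: col j2 A.
Hypothesis c0 : c != 0.
Hypothesis disj : forall i i', i != i' -> forall j j', x i j != x i' j'.

Lemma sum_diff (s : 'I_k -> F) (z z' : 'I_k -> 'rV[F]_n) :
  (forall j, j != j1 -> j != j2 -> z j = z' j) ->
  \sum_j s j *: z j = \sum_j s j *: z' j + s j1 *: (z j1 - z' j1) + s j2 *: (z j2 - z' j2).
Proof.
move=> hz; apply/eqP; rewrite -addrA -subr_eq0 opprD addrA -sumrB.
rewrite (bigD1 j1) //= (bigD1 j2) 1?eq_sym //= big1 ?addr0.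
  by rewrite -!scalerBr subrr.
by move=> j /andP [h1 h2]; rewrite hz // subrr.
Qed.

Definition yy (a b i : 'I_L) (j : 'I_k) : 'rV[F]_n :=
  if j == j1 then x a j1 else if j == j2 then x b j2 else x i j.

Definition valid (a b i : 'I_L) : bool :=
  c *: x a j1 + x b j2 == c *: x i j1 + x i j2.

Lemma yy_other a b i j : j != j1 -> j != j2 -> yy a b i j = x i j.
Proof. by rewrite /yy => /negPf -> /negPf ->. Qed.

Lemma yy1 a b i : yy a b i j1 = x a j1.
Proof. by rewrite /yy eqxx. Qed.

Lemma yy2 a b i : yy a b i j2 = x b j2.
Proof. by rewrite /yy eq_sym (negPf j12) eqxx. Qed.

Lemma sum_yy a b i (s : 'I_k -> F) :
  \sum_j s j *: yy a b i j = \sum_j s j *: x i j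
     + s j1 *: (x a j1 - x i j1) + s j2 *: (x b j2 - x i j2).
Proof. by rewrite (@sum_diff s (yy a b i) (x i)) ?yy1 ?yy2 // => j; exact: yy_other. Qed.

Lemma hA r : A r j1 = c * A r j2.
Proof. by have := congr1 (fun M : 'cV[F]_m => M r 0) hc; rewrite !mxE. Qed.

Lemma valid_sol a b i : is_solution A (x i) -> valid a b i -> is_solution A (yy a b i).
Proof.
move=> hs /eqP hv r; rewrite sum_yy hs add0r hA mulrC -scalerA -scalerDr.
have -> : c *: (x a j1 - x i j1) + (x b j2 - x i j2) = 0.
  by rewrite scalerBr addrACA -opprD hv subrr.
by rewrite scaler0.
Qed.

Lemma valid_v a b i : valid a b i -> x b j2 - x i j2 = - (c *: (x a j1 - x i j1)).
Proof.
move/eqP => hv; apply/eqP; rewrite -addr_eq0 scalerBr addrACA -opprD.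
by rewrite [x b j2 + _]addrC [x i j2 + _]addrC hv subrr.
Qed.

Lemma notbreaks (w : 'rV[F]_k) : w 0 j1 = c * w 0 j2 -> ~ breaks A j1 j2 w.
Proof.
move=> hw; apply; exists c; split => //.
apply/matrixP => r z; rewrite !mxE; case: splitP => r' _; rewrite ?hA //.
by rewrite (ord1 r') hw.
Qed.

Lemma good_w a b i (w : 'rV[F]_k) : valid a b i -> Ann_bal (yy a b i) w ->
  w 0 j1 = c * w 0 j2 -> Ann_bal (x i) w /\ ~ breaks A j1 j2 w.
Proof.
move=> hv [h1 h2] hw; split; last exact: notbreaks.
split => //; move: h1; rewrite (sum_yy a b i (fun j => w 0 j)) /= (valid_v hv) hw.
by rewrite mulrC -scalerA scalerN addrK.
Qed.

Definition fw (i : 'I_L) (w : 'rV[F]_k) : 'rV[F]_n :=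
  x i j1 - (w 0 j1 - c * w 0 j2)^-1 *: \sum_j w 0 j *: x i j.

Lemma fval a b i (w : 'rV[F]_k) : valid a b i -> Ann_bal (yy a b i) w ->
  w 0 j1 != c * w 0 j2 -> x a j1 = fw i w.
Proof.
move=> hv [h1 _] hw; move: h1; rewrite (sum_yy a b i (fun j => w 0 j)) /= (valid_v hv).
rewrite scalerN scalerA -addrA -scalerBl [w 0 j2 * c]mulrC => h.
have hd : w 0 j1 - c * w 0 j2 != 0 by rewrite subr_eq0.
have hu : x a j1 - x i j1 = - ((w 0 j1 - c * w 0 j2)^-1 *: \sum_j w 0 j *: x i j).
  apply: (scalerI hd); rewrite scalerN scalerA mulfV // scale1r.
  by apply/eqP; rewrite -addr_eq0 addrC h.
by rewrite /fw -hu addrC subrK.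
Qed.



Definition Ed (i a : 'I_L) : bool :=
  (a != i) && [exists w : 'rV[F]_k, (w 0 j1 != c * w 0 j2) && (x a j1 == fw i w)].

Lemma outdeg i : (#|[set a | Ed i a]| <= (#|F| ^ k).-1)%N.
Proof.
pose Bs := [set w : 'rV[F]_k | w 0 j1 != c * w 0 j2].
pose P (a : 'I_L) (w : 'rV[F]_k) := (w 0 j1 != c * w 0 j2) && (x a j1 == fw i w).
pose g (a : 'I_L) : 'rV[F]_k := odflt 0 [pick w | P a w].
have hg : forall a, a \in [set a | Ed i a] -> P a (g a).
  move=> a; rewrite inE => /andP [_ /existsP [w hw]].
  rewrite /g; case: pickP => [w' hw' //|/(_ w)]; by rewrite /P hw.
have ginj : {in [set a | Ed i a] &, injective g}.
  move=> a a' ha ha' e; have /andP [_ /eqP e1] := hg a ha.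
  have /andP [_ /eqP e2] := hg a' ha'.
  apply/eqP; apply/negPn/negP => hne; have := disj hne j1 j1.
  by rewrite e1 e2 e eqxx.
rewrite -(card_in_imset ginj).
have hsub : (g @: [set a | Ed i a]) \subset Bs.
  apply/fintype.subsetP => w /imsetP [a ha ->]; rewrite inE; by have /andP [] := hg a ha.
apply: leq_trans (subset_leq_card hsub) _.
have : Bs \proper [set: 'rV[F]_k].
  apply/properP; split; first exact: finset.subsetT.
  by exists 0; rewrite ?inE // !mxE mulr0 eqxx.
move/proper_card; rewrite cardsT card_mx mul1n => h.
by rewrite -ltnS prednK // (leq_ltn_trans _ h).
Qed.


Hypothesis hsol : forall i, is_solution A (x i).
Hypothesis Hno : ~ exists (i : 'I_L) (y : 'I_k -> 'rV[F]_n),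
    [/\ is_solution A y,
        (forall j, j != j1 -> j != j2 -> y j = x i j),
        (forall j, (j == j1) || (j == j2) -> exists i' : 'I_L, y j = x i' j),
        (forall b, Ann_bal y b -> Ann_bal (x i) b)
      & (forall b, Ann_bal y b -> ~ breaks A j1 j2 b)].

Lemma tri_trivial (S : {set 'I_L}) : indep Ed S ->
  forall a b i, a \in S -> b \in S -> i \in S -> valid a b i -> a = b /\ b = i.
Proof.
move=> hS a b i aS bS iS hv.
have [ai|ai] := eqVneq a i.
  subst a; have [->//|bi] := eqVneq b i; exfalso.
  by have := disj bi j2 j2; rewrite (addrI _ (eqP hv)) eqxx.
exfalso.
have [w [hw1 hw2]] : exists w, Ann_bal (yy a b i) w /\ w 0 j1 != c * w 0 j2.
  case: (pselect (exists w, Ann_bal (yy a b i) w /\ w 0 j1 != c * w 0 j2)) => // hn.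
  exfalso; apply: Hno; exists i, (yy a b i).
  have hw : forall w, Ann_bal (yy a b i) w -> w 0 j1 = c * w 0 j2.
    by move=> w hw; apply/eqP/negPn/negP => hne; apply: hn; exists w.
  split.
  - exact: valid_sol.
  - by move=> j; exact: yy_other.
  - move=> j /orP [] /eqP ->.
      by exists a; rewrite yy1.
    by exists b; rewrite yy2.
  - by move=> w h; exact: (good_w hv h (hw w h)).1.
  - by move=> w h; exact: (good_w hv h (hw w h)).2.
have := hS i a iS aS; rewrite eq_sym ai => /(_ isT); apply/negP.
rewrite /Ed ai /= negbK; apply/existsP; exists w; rewrite hw2 /=.
by apply/eqP; exact: fval hv hw1 hw2.
Qed.
End Main.

Theorem lemma6p4 (R : realType) (F : finFieldType) (m k n L : nat)
  (A : 'M[F]_(m, k)) (j1 j2 : 'I_k)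
  (x : 'I_L -> 'I_k -> 'rV[F]_n) :
  type_RC A -> non_degenerate A -> irreducible_sys A ->
  j1 != j2 -> col_equiv A j1 j2 ->
  (forall i, is_solution A (x i)) ->
  (forall i i', i != i' -> forall j j', x i j != x i' j') ->
  4 * (#|F|%:R ^+ k) * (Gamma R #|F|) ^+ n <= (L%:R : R) ->
  exists (i : 'I_L) (y : 'I_k -> 'rV[F]_n),
    [/\ is_solution A y,
        (forall j, j != j1 -> j != j2 -> y j = x i j),
        (forall j, (j == j1) || (j == j2) -> exists i' : 'I_L, y j = x i' j),
        (forall b, Ann_bal y b -> Ann_bal (x i) b)
      & (forall b, Ann_bal y b -> ~ breaks A j1 j2 b)].
Proof.
move=> _ _ _ j12 [c [c0 hc]] hsol disj hL.
case: (pselect (exists (i : 'I_L) (y : 'I_k -> 'rV[F]_n),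
    [/\ is_solution A y,
        (forall j, j != j1 -> j != j2 -> y j = x i j),
        (forall j, (j == j1) || (j == j2) -> exists i' : 'I_L, y j = x i' j),
        (forall b, Ann_bal y b -> Ann_bal (x i) b)
      & (forall b, Ann_bal y b -> ~ breaks A j1 j2 b)])) => // Hno.
exfalso.
pose Q := (#|F| ^ k)%N.
have [S [iS cS]] := turan (outdeg j1 j2 c disj).
have htri := tri_trivial j12 hc c0 disj hsol Hno iS.
pose al (a : {a : 'I_L | a \in S}) (l : 'I_n) := (c *: x (val a) j1) 0 l.
pose be (a : {a : 'I_L | a \in S}) (l : 'I_n) := (x (val a) j2) 0 l.
pose ga (a : {a : 'I_L | a \in S}) (l : 'I_n) := - ((c *: x (val a) j1 + x (val a) j2) 0 l).
have Hsf : forall a b i : {a : 'I_L | a \in S}, (forall l, al a l + be b l + ga i l = 0) <-> (a = b /\ b = i).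
  move=> a b i; split => [h|[-> ->] l]; last by rewrite /al /be /ga !mxE subrr.
  have hv : valid j1 j2 x c (val a) (val b) (val i).
    apply/eqP/rowP => l; have := h l; rewrite /al /be /ga !mxE => hl.
    by apply/eqP; rewrite -subr_eq0 hl.
  have [e1 e2] := htri _ _ _ (valP a) (valP b) (valP i) hv.
  by split; apply: val_inj.
have hI : (#|{: {a : 'I_L | a \in S}}|%:R : R) <= Gamma R #|F| ^+ n.
  apply: le_Gamma => // z hz.
  by have := sumfree_J Hsf hz; rewrite card_ord.
rewrite card_sig in hI.
have hS : #|[pred a | a \in S]| = #|S| by apply: eq_card.
rewrite hS {hS} in hI.
rewrite card_ord in cS.
have hQ : (0 < Q)%N by rewrite expn_gt0 (ltnW (q_gt1 F)).
have G1 : 1 <= Gamma R #|F| ^+ n by apply: exprn_ege1; exact: Gamma_ge1.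
have eQ : (#|F|%:R ^+ k : R) = (Q.-1)%:R + 1 by rewrite natr1 prednK // natrX.
rewrite eQ in hL.
have hL2 : (L%:R : R) <= ((2 * Q.-1).+1)%:R * Gamma R #|F| ^+ n.
  apply: le_trans (_ : ((2 * Q.-1).+1 * #|S|)%N%:R <= _); first by rewrite ler_nat.
  by rewrite (natrM R ((2*Q.-1).+1) #|S|) ler_wpM2l.
have e2 : (((2 * Q.-1).+1)%:R : R) = 2 * (Q.-1)%:R + 1.
  by rewrite -natr1 natrM.
rewrite e2 in hL2.
have h0 : 0 <= (Q.-1)%:R * Gamma R #|F| ^+ n :> R by rewrite mulr_ge0 // (le_trans _ G1).
move: hL hL2 G1 h0.
generalize (Gamma R #|F| ^+ n) ((Q.-1)%:R : R) (L%:R : R) => G D L' h1 h2 h3 h4.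
clear -h1 h2 h3 h4; nra.
Qed.
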